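(* Let $\mathcal{C}$ be an assembler satisfying (S), (Ep), (D) with sink $S$, and let $U$ be a noninitial object of $\mathcal{C}$. Let $\mathcal{C}_U$ be the full subcategory of $\mathcal{C}$ on those objects $A$ with $\mathrm{Hom}_{\mathcal{C}}(A,U)\neq\emptyset$. Let $\mathcal{F}=\{f_A:A\to S\}$ be a family of morphisms to the sink of $\mathcal{C}$ (with $f_S=1_S$) and let $\mathcal{F}'=\{f'_A:A\to U\}_{A\in\mathcal{C}_U}$ be a family of morphisms to $U$ in $\mathcal{C}_U$ (with $f'_U=1_U$) satisfying $f_A=f_Uf'_A$ for all $A$ in $\mathcal{C}_U$. Let $G$ and $G'$ be the groups associated to $\mathcal{C}$ (with sink $S$) and $\mathcal{C}_U$ (with sink $U$) respectively. Then there exists a group isomorphism $\varphi:G'\to G$ such that $\pi_{\mathcal{F}}\circ j=\varphi_*\circ\pi_{\mathcal{F}'}$ as functors $\mathcal{C}_U\to\mathcal{S}_G$, where $j:\mathcal{C}_U\to\mathcal{C}$ is the inclusion and $\varphi_*:\mathcal{S}_{G'}\to\mathcal{S}_G$ is induced by $\varphi$.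
   Context: An assembler is a small category with a Grothendieck topology satisfying: (I) there is an initial object $\varnothing$ covered by the empty family; (R) any two finite disjoint covering families of an object have a common refinement which is a finite disjoint covering family; (M) all morphisms are monomorphisms. Maps $A\to C$, $B\to C$ are disjoint if $A\times_CB$ exists and is initial. Conditions: (S) there is an object $S$ (the sink) with $\mathcal{C}(A,S)\neq\emptyset$ for all $A$; (Ep) all morphisms with noninitial domain are epimorphisms and every family $\{A\to B\}$ with $A\ne\varnothing$ is covering; (D) for $A,B\neq\varnothing$ no two morphisms $A\to C$, $B\to C$ are disjoint. For such an assembler with sink $S$, the group $G$ consists of classes $[S\xleftarrow{f_1}A\xrightarrow{f_2}S]$ with $A$ noninitial, modulo the equivalence relation generated by $[A;f_1,f_2]\sim[B;g_1,g_2]$ when there are $h:C\to A$, $k:C\to B$ with $f_1h=g_1k$, $f_2h=g_2k$; the product is $[A;f_1,f_2]\cdot[B;g_1,g_2]=[X;f_1g_1',g_2f_2']$ for any noninitial $X$ with $g_1':X\to A$, $f_2':X\to B$, $f_2g_1'=g_1f_2'$. $\mathcal{S}_G$ is the assembler with objects $\varnothing,*$, one morphism $\varnothing\to *$, $\mathrm{Aut}( * )=G$, and a homomorphism of groups induces a morphism between such assemblers. For a family $\mathcal{F}=\{f_A:A\to S\}$, $\pi_{\mathcal{F}}$ sends noninitial objects to $*$ and $g:A\to B$ to $[A;f_A,f_Bg]$. *)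

(* Defs.v *)
From Stdlib Require Import List Relations.
Import ListNotations.
Set Implicit Arguments.
Unset Strict Implicit.

Record Cat := {
  Obj :> Type;
  Hom : Obj -> Obj -> Type;
  idm : forall A, Hom A A;
  comp : forall A B D, Hom B D -> Hom A B -> Hom A D;
  comp_id_l : forall A B (f : Hom A B), comp (idm B) f = f;
  comp_id_r : forall A B (f : Hom A B), comp f (idm A) = f;
  comp_assoc : forall A B D E (h : Hom D E) (g : Hom B D) (f : Hom A B),
      comp h (comp g f) = comp (comp h g) f
}.
Arguments Hom {c} _ _.
Arguments idm {c} _.
Arguments comp {c A B D} _ _.
Notation "g ∘ f" := (comp g f) (at level 40, left associativity).

Section CatDefs.
Variable C : Cat.

Definition initial (A : C) : Prop :=
  forall B : C, inhabited (Hom A B) /\ forall f g : Hom A B, f = g.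

Definition mono {A B : C} (f : Hom A B) : Prop :=
  forall (X : C) (g h : Hom X A), f ∘ g = f ∘ h -> g = h.

Definition epi {A B : C} (f : Hom A B) : Prop :=
  forall (X : C) (g h : Hom B X), g ∘ f = h ∘ f -> g = h.

Definition is_pullback {A B D : C} (f : Hom A D) (g : Hom B D)
    (P : C) (p1 : Hom P A) (p2 : Hom P B) : Prop :=
  f ∘ p1 = g ∘ p2 /\
  forall (Q : C) (q1 : Hom Q A) (q2 : Hom Q B), f ∘ q1 = g ∘ q2 ->
    exists! u : Hom Q P, p1 ∘ u = q1 /\ p2 ∘ u = q2.

Definition disjoint {A B D : C} (f : Hom A D) (g : Hom B D) : Prop :=
  exists (P : C) (p1 : Hom P A) (p2 : Hom P B), is_pullback f g p1 p2 /\ initial P.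

Definition sieve (A : C) := forall B : C, Hom B A -> Prop.

Definition is_sieve {A : C} (R : sieve A) : Prop :=
  forall (B D : C) (f : Hom B A) (g : Hom D B), R B f -> R D (f ∘ g).

Definition pullback_sieve {A B : C} (h : Hom B A) (R : sieve A) : sieve B :=
  fun D g => R D (h ∘ g).

Record GTopology := {
  covers : forall A : C, sieve A -> Prop;
  covers_sieve : forall A (R : sieve A), covers R -> is_sieve R;
  covers_max : forall A : C, covers (fun (B : C) (_ : Hom B A) => True);
  covers_stable : forall A (R : sieve A), covers R ->
      forall (B : C) (h : Hom B A), covers (pullback_sieve h R);
  covers_local : forall A (R R' : sieve A), covers R -> is_sieve R' ->
      (forall (B : C) (f : Hom B A), R B f -> covers (pullback_sieve f R')) ->
      covers R'
}.

Definition family (A : C) := list {B : C & Hom B A}.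

Definition gen_sieve {A : C} (F : family A) : sieve A :=
  fun B g => exists x, In x F /\ exists h : Hom B (projT1 x), g = projT2 x ∘ h.

Definition covering (J : GTopology) {A : C} (F : family A) : Prop :=
  covers J (gen_sieve F).

Definition pairwise_disjoint {A : C} (F : family A) : Prop :=
  forall (i j : nat) x y, i <> j -> nth_error F i = Some x -> nth_error F j = Some y ->
    disjoint (projT2 x) (projT2 y).

Definition fin_disj_covering (J : GTopology) {A : C} (F : family A) : Prop :=
  covering J F /\ pairwise_disjoint F.

Definition refines {A : C} (G F : family A) : Prop :=
  forall y, In y G -> exists x, In x F /\
    exists h : Hom (projT1 y) (projT1 x), projT2 y = projT2 x ∘ h.

End CatDefs.

Record Assembler := {
  asm_cat :> Cat;
  asm_top : GTopology asm_cat;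
  asm_I : exists E : asm_cat, initial E /\ covering asm_top (@nil {B : asm_cat & Hom B E});
  asm_R : forall (A : asm_cat) (F1 F2 : family A),
      fin_disj_covering asm_top F1 -> fin_disj_covering asm_top F2 ->
      exists F3 : family A, fin_disj_covering asm_top F3 /\ refines F3 F1 /\ refines F3 F2;
  asm_M : forall (A B : asm_cat) (f : Hom A B), mono f
}.

Definition is_sink (C : Cat) (S : C) : Prop := forall A : C, inhabited (Hom A S).

Definition cond_Ep (C : Assembler) : Prop :=
  forall (A B : C) (f : Hom A B), ~ initial A ->
    epi f /\ covering (asm_top C) [existT (fun X : C => Hom X B) A f].

Definition cond_D (C : Assembler) : Prop :=
  forall (A B D : C) (f : Hom A D) (g : Hom B D),
    ~ initial A -> ~ initial B -> ~ disjoint f g.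

Section FullSub.
Variable C : Cat.
Variable U : C.

Definition CU_obj := {A : C | inhabited (Hom A U)}.
Definition CU_hom (X Y : CU_obj) := Hom (proj1_sig X) (proj1_sig Y).

Definition CU : Cat :=
  {| Obj := CU_obj; Hom := CU_hom;
     idm := fun X => idm (proj1_sig X);
     comp := fun X Y Z (g : CU_hom Y Z) (f : CU_hom X Y) => g ∘ f;
     comp_id_l := fun X Y f => comp_id_l f;
     comp_id_r := fun X Y f => comp_id_r f;
     comp_assoc := fun X Y Z W h g f => comp_assoc h g f |}.

Definition CU_U : CU := exist (fun A : C => inhabited (Hom A U)) U (inhabits (idm U)).

Definition j_obj (X : CU) : C := proj1_sig X.
End FullSub.

Section Group.
Variable C : Cat.
Variable S : C.

Record span := mkSpan { sp_obj : C; sp_l : Hom sp_obj S; sp_r : Hom sp_obj S }.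

Definition span_rel0 (s t : span) : Prop :=
  ~ initial (sp_obj s) /\ ~ initial (sp_obj t) /\
  exists (X : C) (h : Hom X (sp_obj s)) (k : Hom X (sp_obj t)),
    ~ initial X /\ sp_l s ∘ h = sp_l t ∘ k /\ sp_r s ∘ h = sp_r t ∘ k.

Definition span_eq : span -> span -> Prop := clos_refl_sym_trans span span_rel0.

Definition cls (s : span) : span -> Prop := span_eq s.

Definition Grp := {P : span -> Prop | exists s : span, ~ initial (sp_obj s) /\ P = cls s}.

(* graph of the product:
   [A;f1,f2] . [B;g1,g2] = [X; f1 g1', g2 f2']  for noninitial X,
   g1' : X -> A, f2' : X -> B with f2 g1' = g1 f2' *)
Definition Gmul (x y z : Grp) : Prop :=
  exists (a b : span) (X : C) (g1' : Hom X (sp_obj a)) (f2' : Hom X (sp_obj b)),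
    ~ initial (sp_obj a) /\ ~ initial (sp_obj b) /\ ~ initial X /\
    proj1_sig x = cls a /\ proj1_sig y = cls b /\
    sp_r a ∘ g1' = sp_l b ∘ f2' /\
    proj1_sig z = cls (@mkSpan X (sp_l a ∘ g1') (sp_r b ∘ f2')).
End Group.

Definition is_group_iso (C1 : Cat) (S1 : C1) (C2 : Cat) (S2 : C2)
    (phi : Grp S1 -> Grp S2) : Prop :=
  (forall x y, phi x = phi y -> x = y) /\
  (forall z, exists x, phi x = z) /\
  (forall x y z, Gmul x y z -> Gmul (phi x) (phi y) (phi z)).

(* Main.v *)
Require Import Defs.
From Stdlib Require Import Relations List Classical FunctionalExtensionality PropExtensionality ClassicalEpsilon ProofIrrelevance.
Set Implicit Arguments.
Unset Strict Implicit.

Lemma init_uniq (C : Cat) (A B : C) (g h : Hom A B) : initial A -> g = h.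
Proof. intros HA. destruct (HA B) as [_ H]. apply H. Qed.

Lemma cls_eq (C : Cat) (S : C) (s t : span S) : span_eq s t -> cls s = cls t.
Proof.
  intros H. unfold cls. apply functional_extensionality; intro u.
  apply propositional_extensionality; split; intro H'.
  - eapply rst_trans; [apply rst_sym; exact H| exact H'].
  - eapply rst_trans; [exact H| exact H'].
Qed.

Lemma eq_cls (C : Cat) (S : C) (s t : span S) : cls s = cls t -> span_eq s t.
Proof. intros H. assert (H0 : cls t t) by apply rst_refl. rewrite <- H in H0. exact H0. Qed.

Lemma grp_eq (C : Cat) (S : C) (x y : Grp S) : proj1_sig x = proj1_sig y -> x = y.
Proof. destruct x, y; simpl; intros; subst; f_equal; apply proof_irrelevance. Qed.

Lemma common (C : Assembler) (HD : cond_D C) (A B D : C) (a : Hom A D) (b : Hom B D) :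
  ~ initial A -> ~ initial B ->
  exists (X : C) (x1 : Hom X A) (x2 : Hom X B), ~ initial X /\ a ∘ x1 = b ∘ x2.
Proof.
  intros nA nB. apply NNPP; intro Hn.
  apply (HD A B D a b nA nB).
  destruct (asm_I C) as [E [HE _]].
  destruct (HE A) as [[p1] _]. destruct (HE B) as [[p2] _].
  exists E, p1, p2. split; [|exact HE].
  split.
  - apply init_uniq; exact HE.
  - intros Q q1 q2 Hq.
    assert (HQ : initial Q).
    { apply NNPP; intro nQ. apply Hn. exists Q, q1, q2. split; assumption. }
    destruct (HQ E) as [[u] _]. exists u. split.
    + split; apply init_uniq; exact HQ.
    + intros v _. apply init_uniq; exact HQ.
Qed.

Lemma rel0_refl (C : Cat) (S : C) (s : span S) : ~ initial (sp_obj s) -> span_rel0 s s.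
Proof. intros n. split; [exact n|split;[exact n|]]. exists (sp_obj s), (idm _), (idm _). auto. Qed.

Lemma rel0_sym (C : Cat) (S : C) (s t : span S) : span_rel0 s t -> span_rel0 t s.
Proof. intros [n1 [n2 [X [h [k [nX [e1 e2]]]]]]]. split;[|split];auto. exists X,k,h. auto. Qed.

Lemma rel0_trans (C : Assembler) (HD : cond_D C) (S : C) (s t u : span S) :
  span_rel0 s t -> span_rel0 t u -> span_rel0 s u.
Proof.
  intros [n1 [n2 [X [h [k [nX [e1 e2]]]]]]] [_ [n3 [Y [h' [k' [nY [e3 e4]]]]]]].
  destruct (@common C HD _ _ _ k h' nX nY) as [Z [z1 [z2 [nZ ez]]]].
  split;[auto|split;[auto|]]. exists Z, (h ∘ z1), (k' ∘ z2). split;[auto|split].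
  - rewrite !comp_assoc, e1, <- e3, <- !comp_assoc, ez; reflexivity.
  - rewrite !comp_assoc, e2, <- e4, <- !comp_assoc, ez; reflexivity.
Qed.

Lemma span_eq_or (C : Assembler) (HD : cond_D C) (S : C) (s t : span S) :
  span_eq s t -> s = t \/ span_rel0 s t.
Proof.
  unfold span_eq. induction 1 as [x y H|x|x y _ IH|x y z _ IH1 _ IH2].
  - right; assumption.
  - left; reflexivity.
  - destruct IH; [left; symmetry; auto | right; apply rel0_sym; auto].
  - destruct IH1 as [->|H1]; destruct IH2 as [->|H2]; auto.
    right; eapply rel0_trans; eauto.
Qed.

Lemma span_eq_rel0 (C : Assembler) (HD : cond_D C) (S : C) (s t : span S) :
  span_eq s t -> ~ initial (sp_obj s) -> span_rel0 s t.
Proof.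
  intros H n. destruct (span_eq_or HD H) as [<-|H']; auto. apply rel0_refl; auto.
Qed.

Definition Fsp (C : Cat) (S U : C) (fU : Hom U S) (s : span (C:=CU U) (CU_U U)) : span S :=
  @mkSpan C S (proj1_sig (sp_obj s)) (fU ∘ (sp_l s : Hom _ U)) (fU ∘ (sp_r s : Hom _ U)).

Lemma init_CU (C : Assembler) (U : C) (A : CU U) :
  initial (C:=C) (proj1_sig A) <-> initial (C:=CU U) A.
Proof.
  split.
  - intros H B. exact (H (proj1_sig B)).
  - intros H B.
    destruct (asm_I C) as [E [HE _]].
    destruct (HE U) as [[eU] _].
    set (E' := exist (fun X : C => inhabited (Hom X U)) E (inhabits eU) : CU U).
    destruct (H E') as [[a0] _].
    assert (a : Hom (proj1_sig A) E) by exact a0.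
    destruct (HE (proj1_sig A)) as [[e] _].
    assert (Hid : e ∘ a = idm (proj1_sig A)).
    { destruct (H A) as [_ Hu]. exact (Hu (e ∘ a) (idm _)). }
    destruct (HE B) as [[b] Hb]. split.
    + constructor. exact (b ∘ a).
    + intros g h. rewrite <- (comp_id_r g), <- (comp_id_r h), <- Hid, !comp_assoc.
      rewrite (Hb (g ∘ e) (h ∘ e)). reflexivity.
Qed.

Lemma rel0_F (C : Assembler) (S U : C) (fU : Hom U S) (s t : span (C:=CU U) (CU_U U)) :
  span_rel0 s t -> span_rel0 (Fsp fU s) (Fsp fU t).
Proof.
  intros [n1 [n2 [X [h [k [nX [e1 e2]]]]]]].
  split; [|split].
  - simpl. intro Hi. apply n1. apply init_CU. exact Hi.
  - simpl. intro Hi. apply n2. apply init_CU. exact Hi.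
  - exists (proj1_sig X), h, k. split; [intro Hi; apply nX; apply init_CU; exact Hi|].
    simpl. split; rewrite <- !comp_assoc.
    + exact (f_equal (fun m => fU ∘ m) e1).
    + exact (f_equal (fun m => fU ∘ m) e2).
Qed.

Lemma rel0_F_inv (C : Assembler) (S U : C) (fU : Hom U S) (s t : span (C:=CU U) (CU_U U)) :
  span_rel0 (Fsp fU s) (Fsp fU t) -> span_rel0 s t.
Proof.
  intros [n1 [n2 [X [h [k [nX [e1 e2]]]]]]].
  simpl in *.
  split; [|split].
  - intro Hi. apply n1. apply init_CU. exact Hi.
  - intro Hi. apply n2. apply init_CU. exact Hi.
  - pose (Xc := exist (fun Y : C => inhabited (Hom Y U)) X (inhabits (@comp C _ _ _ (sp_l s) h)) : CU U).
    exists Xc, h, k. split; [intro Hi; apply nX; apply (init_CU Xc); exact Hi|].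
    split.
    + apply (@asm_M C _ _ fU). simpl. rewrite !comp_assoc. exact e1.
    + apply (@asm_M C _ _ fU). simpl. rewrite !comp_assoc. exact e2.
Qed.

Lemma span_eq_F (C : Assembler) (S U : C) (fU : Hom U S) (s t : span (C:=CU U) (CU_U U)) :
  span_eq s t -> span_eq (Fsp fU s) (Fsp fU t).
Proof.
  unfold span_eq. induction 1.
  - apply rst_step. apply rel0_F. assumption.
  - apply rst_refl.
  - apply rst_sym. assumption.
  - eapply rst_trans; eassumption.
Qed.

Definition phi_map (C : Assembler) (S U : C) (fU : Hom U S) (x : Grp (CU_U U)) : Grp S.
Proof.
  destruct (constructive_indefinite_description _ (proj2_sig x)) as [s [ns _]].
  exists (cls (Fsp fU s)). exists (Fsp fU s). split; [|reflexivity].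
  simpl. intro Hi. apply ns. apply init_CU. exact Hi.
Defined.

Lemma phi_cls (C : Assembler) (S U : C) (fU : Hom U S) (x : Grp (CU_U U)) a :
  proj1_sig x = cls a -> proj1_sig (phi_map fU x) = cls (Fsp fU a).
Proof.
  intros ea. unfold phi_map.
  destruct (constructive_indefinite_description _ (proj2_sig x)) as [s [ns es]].
  simpl. apply cls_eq. apply span_eq_F. apply eq_cls. rewrite <- es, ea. reflexivity.
Qed.

Theorem proposition3p9 (C : Assembler) (S : C)
  (HS : is_sink S) (HEp : cond_Ep C) (HD : cond_D C)
  (U : C) (HU : ~ initial U)
  (f : forall A : C, Hom A S) (hfS : f S = idm S)
  (f' : forall A : CU U, Hom (j_obj A) U) (hf'U : f' (CU_U U) = idm U)
  (hff' : forall A : CU U, f (j_obj A) = f U ∘ f' A) :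
  exists phi : Grp (C := CU U) (CU_U U) -> Grp (C := C) S,
    is_group_iso phi /\
    (* pi_F o j = phi_* o pi_F' on objects *)
    (forall A : CU U, initial (C := C) (j_obj A) <-> initial (C := CU U) A) /\
    (* ... and on morphisms with noninitial domain (all other hom-sets of S_G are singletons) *)
    (forall (A B : CU U) (g : Hom A B) (x : Grp (C := CU U) (CU_U U)),
       ~ initial (C := CU U) A ->
       proj1_sig x = cls (@mkSpan (CU U) (CU_U U) A (f' A) (f' B ∘ g)) ->
       proj1_sig (phi x) = cls (@mkSpan C S (j_obj A) (f (j_obj A)) (f (j_obj B) ∘ g))).
Proof.
  exists (phi_map (f U)). split; [|split].
  - split; [|split].
    + intros x y Hxy.
      destruct (proj2_sig x) as [a [na ea]]. destruct (proj2_sig y) as [b [nb eb]].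
      pose proof (phi_cls (f U) ea) as E1. pose proof (phi_cls (f U) eb) as E2.
      rewrite Hxy in E1. rewrite E1 in E2.
      apply grp_eq. rewrite ea, eb. apply cls_eq. apply rst_step.
      apply (rel0_F_inv (fU := f U)).
      apply (span_eq_rel0 HD). apply eq_cls. exact E2.
      simpl. intro Hi. apply na. apply init_CU. exact Hi.
    + intros z. destruct (proj2_sig z) as [u [nu eu]].
      destruct (@common C HD _ _ _ (sp_l u) (f U) nu HU) as [X [x1 [x2 [nX e]]]].
      destruct (@common C HD _ _ _ (sp_r u ∘ x1) (f U) nX HU) as [Y [y1 [y2 [nY e']]]].
      pose (Yc := exist (fun Z : C => inhabited (Hom Z U)) Y (inhabits y2) : CU U).
      pose (w := @mkSpan (CU U) (CU_U U) Yc (x2 ∘ y1 : Hom Y U) (y2 : Hom Y U)).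
      assert (nw : ~ initial (C:=CU U) Yc).
      { intro Hi. apply nY. apply (init_CU Yc). exact Hi. }
      exists (exist _ (cls w) (ex_intro _ w (conj nw eq_refl))).
      apply grp_eq. rewrite (phi_cls (f U) (x := exist _ (cls w) (ex_intro _ w (conj nw eq_refl))) (a := w) eq_refl).
      rewrite eu. apply cls_eq. apply rst_step.
      split; [exact nY|split; [exact nu|]].
      exists Y, (idm Y), (x1 ∘ y1). split; [exact nY|]. simpl. split.
      * rewrite comp_id_r, comp_assoc, <- e, <- comp_assoc. reflexivity.
      * rewrite comp_id_r, comp_assoc, e'. reflexivity.
    + intros x y z [a [b [X [g1' [f2' [na [nb [nX [ex [ey [e ez]]]]]]]]]]].
      exists (Fsp (f U) a), (Fsp (f U) b), (proj1_sig X), g1', f2'.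
      split; [simpl; intro Hi; apply na; apply init_CU; exact Hi|].
      split; [simpl; intro Hi; apply nb; apply init_CU; exact Hi|].
      split; [intro Hi; apply nX; apply init_CU; exact Hi|].
      split; [apply phi_cls; exact ex|].
      split; [apply phi_cls; exact ey|].
      split.
      * simpl. rewrite <- !comp_assoc. exact (f_equal (fun m => f U ∘ m) e).
      * rewrite (phi_cls (f U) ez). unfold Fsp. simpl. f_equal. f_equal; apply comp_assoc.
  - intros A. apply init_CU.
  - intros A B g x nA ex. rewrite (phi_cls (f U) ex). unfold Fsp. simpl.
    rewrite !hff'. f_equal. f_equal. apply comp_assoc.
Qed.
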